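(* Let $L\in\mathbb N$ and $0\le p<1$. On $\Omega=\{0,1\}^L$, with $\omega=(\omega(0),\dots,\omega(L-1))$ and $|\omega|=\sum_j\omega(j)$, let $Q$ be the transition function $$Q\big(\eta,(\eta(1),\dots,\eta(L-1),s)\big)=\begin{cases}\frac1L\big(|\eta|p+(L-|\eta|)(1-p)\big),& s=1,\\ \frac1L\big((L-|\eta|)p+|\eta|(1-p)\big),& s=0,\end{cases}$$ and $Q(\eta,\omega)=0$ for all other $\omega$. Let $c_j=(1-p)\big(1-\frac jL\big)+\frac jLp$ for $0\le j\le L$. Then $$\pi(\omega)=Z^{-1}\prod_{j=0}^{|\omega|-1}\frac{c_j}{c_{L-j-1}},$$ with $Z$ the normalizing constant (empty product $=1$), is a stationary distribution of $Q$, i.e. $\pi Q=\pi$. *)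

(* Defs.v *)
From HB Require Import structures.
From mathcomp Require Import all_boot all_order all_algebra.
Set Implicit Arguments. Unset Strict Implicit. Unset Printing Implicit Defensive.
Import Order.TTheory GRing.Theory Num.Theory.
Local Open Scope ring_scope.

(* Omega = {0,1}^L, a configuration is w : {ffun 'I_L -> bool},
   w i = true means w(i) = 1. *)
Definition config (L : nat) := {ffun 'I_L -> bool}.

Definition weight (L : nat) (w : config L) : nat := (\sum_(i < L) (w i : nat))%N.

Definition shift (L : nat) (eta : config L) (s : bool) : config L :=
  [ffun i : 'I_L => if (i.+1 < L)%N then eta (insubd i i.+1) else s].

Definition Qtrans (R : realFieldType) (L : nat) (p : R) (eta w : config L) : R :=
  let k := (weight eta)%:R in
  if w == shift eta true then (k * p + (L%:R - k) * (1 - p)) / L%:R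
  else if w == shift eta false then ((L%:R - k) * p + k * (1 - p)) / L%:R
  else 0.

Definition cc (R : realFieldType) (L : nat) (p : R) (j : nat) : R :=
  (1 - p) * (1 - j%:R / L%:R) + j%:R / L%:R * p.

Definition pi_un (R : realFieldType) (L : nat) (p : R) (w : config L) : R :=
  \prod_(j < weight w) (cc L p j / cc L p (L - j - 1)%N).

Definition Zconst (R : realFieldType) (L : nat) (p : R) : R :=
  \sum_(w : config L) pi_un p w.

Definition pi_stat (R : realFieldType) (L : nat) (p : R) (w : config L) : R :=
  pi_un p w / Zconst L p.

(* Main.v *)
Require Import Defs.
From HB Require Import structures.
From mathcomp Require Import all_boot all_order all_algebra.
From mathcomp Require Import zify ring lra.
Import Order.TTheory GRing.Theory Num.Theory.
Local Open Scope ring_scope.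

Set Implicit Arguments. Unset Strict Implicit.
Section S.
Variable R : realFieldType.
Variable p : R.
Hypothesis hp0 : 0 <= p.
Hypothesis hp1 : p < 1.

Lemma cc_pos (L j : nat) : (j < L)%N -> 0 < cc L p j.
Proof.
move=> hj. rewrite /cc.
have hL : 0 < L%:R :> R by rewrite ltr0n; lia.
have ha : j%:R / L%:R < 1 :> R by rewrite ltr_pdivrMr // mul1r ltr_nat.
have ha0 : 0 <= j%:R / L%:R :> R by rewrite divr_ge0.
set a := j%:R / L%:R in ha ha0 *.
have h1 : 0 < (1 - p) * (1 - a) by apply: mulr_gt0; rewrite subr_gt0.
have h2 : 0 <= a * p by apply: mulr_ge0.
lra.
Qed.

Lemma cc_Q1 (L k : nat) : (0 < L)%N ->
  (k%:R * p + (L%:R - k%:R) * (1 - p)) / L%:R = cc L p k.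
Proof.
move=> hL; have h : L%:R != 0 :> R by rewrite pnatr_eq0 -lt0n.
by rewrite /cc; field.
Qed.

Lemma cc_Q0 (L k : nat) : (0 < L)%N ->
  ((L%:R - k%:R) * p + k%:R * (1 - p)) / L%:R = 1 - cc L p k.
Proof.
move=> hL; have h : L%:R != 0 :> R by rewrite pnatr_eq0 -lt0n.
by rewrite /cc; field.
Qed.

Lemma cc_compl (L k : nat) : (0 < L)%N -> (k <= L)%N ->
  cc L p (L - k) = 1 - cc L p k.
Proof.
move=> hL hk; have h : L%:R != 0 :> R by rewrite pnatr_eq0 -lt0n.
by rewrite /cc natrB //; field.
Qed.

Lemma cc_compl' (L k : nat) : (k < L)%N ->
  cc L p k.+1 = 1 - cc L p (L - k - 1).
Proof.
move=> hk. rewrite -subnDA addn1 cc_compl //; [ring | lia].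
Qed.

Definition etaw n (w : config n.+1) (x : bool) : config n.+1 :=
  [ffun i => if unlift ord0 i is Some j then w (widen_ord (leqnSn n) j) else x].

Lemma shift_etaw n (w : config n.+1) x : shift (etaw w x) (w ord_max) = w.
Proof.
apply/ffunP => i; rewrite !ffunE; case: ifP => hi.
  have hi' : (i < n)%N by rewrite -ltnS.
  rewrite (_ : insubd i i.+1 = lift ord0 (Ordinal hi')); last first.
    by apply/val_inj; rewrite /= val_insubd hi.
  rewrite liftK /=; congr (w _); exact/val_inj.
suff -> : i = ord_max by [].
apply/val_inj => /=; have := ltn_ord i; move: hi => /negbT; lia.
Qed.

Lemma shift_eq n (eta w : config n.+1) s :
  shift eta s = w -> eta = etaw w (eta ord0).
Proof.
move=> <-.
apply/ffunP => i; rewrite !ffunE; case: (unliftP ord0 i) => [j ->|->] //.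
rewrite ffunE /= ltnS ltn_ord; congr (eta _); apply/val_inj.
by rewrite /= val_insubd /= ltnS ltn_ord.
Qed.

Definition mw n (w : config n.+1) : nat :=
  (\sum_(i < n) (w (widen_ord (leqnSn n) i) : nat))%N.

Lemma weight_last n (w : config n.+1) : weight w = (mw w + w ord_max)%N.
Proof. by rewrite /weight big_ord_recr. Qed.

Lemma weight_etaw n (w : config n.+1) x : weight (etaw w x) = (x + mw w)%N.
Proof.
rewrite /weight big_ord_recl ffunE unlift_none; congr (_ + _)%N.
by apply: eq_bigr => i _; rewrite ffunE liftK.
Qed.

Lemma mw_le n (w : config n.+1) : (mw w <= n)%N.
Proof.
rewrite /mw -[X in (_ <= X)%N]card_ord -sum1_card.
by apply: leq_sum => i _; exact: leq_b1.
Qed.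

Lemma weight_le n (w : config n.+1) : (weight w <= n.+1)%N.
Proof. rewrite weight_last; have := mw_le w; case: (w ord_max) => /=; lia. Qed.

Lemma pi_un_pos n (w : config n.+1) : 0 < pi_un p w.
Proof.
rewrite /pi_un; apply: prodr_gt0 => j _.
have hj : (j < n.+1)%N by have := ltn_ord j; have := weight_le w; lia.
apply: divr_gt0; apply: cc_pos => //; lia.
Qed.

Lemma Qv n (w : config n.+1) x :
  Qtrans p (etaw w x) w =
  if w ord_max then cc n.+1 p (x + mw w) else 1 - cc n.+1 p (x + mw w).
Proof.
rewrite /Qtrans weight_etaw; have hs := shift_etaw w x.
case hb: (w ord_max) hs => hs.
  have -> : w == shift (etaw w x) true by rewrite hs eqxx.
  by rewrite cc_Q1.
have -> : (w == shift (etaw w x) true) = false.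
  apply/negbTE; apply/eqP => /(congr1 (fun f : config _ => f ord_max)).
  by rewrite hb ffunE /= ltnn.
have -> : w == shift (etaw w x) false by rewrite hs eqxx.
by rewrite cc_Q0.
Qed.

Lemma stat_un n (w : config n.+1) :
  \sum_(eta : config n.+1) pi_un p eta * Qtrans p eta w = pi_un p w.
Proof.
have ne : etaw w true != etaw w false.
  by apply/eqP => /(congr1 (fun f : config _ => f ord0)); rewrite !ffunE unlift_none.
rewrite (bigD1 (etaw w false)) //= (bigD1 (etaw w true)) //= big1 ?addr0; last first.
  move=> eta /andP [h0 h1].
  have key : forall s, w = shift eta s -> False.
    move=> s /esym/shift_eq he; move: h0 h1; rewrite he.
    by case: (eta ord0); rewrite eqxx.
  rewrite /Qtrans; case: eqP => [/key//|_]; case: eqP => [/key//|_].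
  by rewrite mulr0.
rewrite !Qv /pi_un !weight_etaw weight_last.
have hm := mw_le w.
set m := mw w.
have hc : cc n.+1 p (n.+1 - m - 1) != 0 by rewrite gt_eqF // cc_pos //; lia.
rewrite (cc_compl' (_ : (m < n.+1)%N)); last by lia.
case: (w ord_max) => /=; rewrite ?add0n ?add1n ?addn0 ?addn1 big_ord_recr /=.
  by field.
by field.
Qed.

End S.

Theorem mainTheorem14 (R : realFieldType) (L : nat) (p : R)
  (hL : (0 < L)%N) (hp0 : 0 <= p) (hp1 : p < 1) :
  (forall w : config L, 0 <= pi_stat p w) /\
  \sum_(w : config L) pi_stat p w = 1 /\
  (forall w : config L, \sum_(eta : config L) pi_stat p eta * Qtrans p eta w = pi_stat p w).
Proof.
case: L hL => // n _.
have hpos := pi_un_pos hp0 hp1 (n:=n).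
have hZ : 0 < Zconst n.+1 p.
  rewrite /Zconst; apply: (lt_le_trans (hpos [ffun => false])).
  rewrite (bigD1 ([ffun => false] : config n.+1) isT).
  rewrite lerDl; apply: sumr_ge0 => w _; exact: ltW (hpos w).
have hZ0 : Zconst n.+1 p != 0 by rewrite gt_eqF.
split; [|split].
- move=> w; rewrite /pi_stat; apply: divr_ge0; [exact: ltW (hpos w) | exact: ltW hZ].
- rewrite /pi_stat -mulr_suml; exact: divff hZ0.
- move=> w; rewrite /pi_stat -(stat_un hp0 hp1 w) mulr_suml.
  by apply: eq_bigr => eta _; rewrite mulrAC.
Qed.
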